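(* Let $a\ge3$ be an integer. In the graded cluster algebra $\mathcal{A}\Big((x_1,x_2,x_3),\begin{pmatrix}0&a&-2\\-a&0&a\\2&-a&0\end{pmatrix},(a,2,a)\Big)$ there are infinitely many degrees each of which is the degree of infinitely many distinct cluster variables.
   Context: Graded cluster algebras: for a $3\times3$ skew-symmetric integer matrix $B=(b_{ij})$, $\mu_k(B)=(b'_{ij})$ with $b'_{ij}=-b_{ij}$ if $i=k$ or $j=k$, $b'_{ij}=b_{ij}+\operatorname{sgn}(b_{ik})\max(b_{ik}b_{kj},0)$ otherwise. A seed $((x_1,x_2,x_3),B)$ mutates in direction $k$ to $(x',\mu_k B)$ with $x'_j=x_j$ ($j\ne k$), $x'_k=\big(\prod_{b_{ik}>0}x_i^{b_{ik}}+\prod_{b_{ik}<0}x_i^{-b_{ik}}\big)/x_k$. Cluster variables are all entries of reachable clusters; $\mathcal{A}(x,B,g)$ is graded by $\deg x_i=g_i$ where $Bg=0$; under mutation at $k$ the degree vector becomes $g'$ with $g'_j=g_j$ ($j\ne k$), $g'_k=-g_k+\sum_{b_{ik}>0}b_{ik}g_i$; every cluster variable is homogeneous. *)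

(* Defs.v *)
From HB Require Import structures.
From mathcomp Require Import all_boot all_order all_algebra.
From mathcomp Require Import fraction.
From mathcomp Require Import mpoly.
Set Implicit Arguments.
Unset Strict Implicit.
Unset Printing Implicit Defensive.
Import Order.TTheory GRing.Theory Num.Theory.
Local Open Scope ring_scope.

Definition QX := {fraction {mpoly rat[3]}}.

Definition exmat := 'I_3 -> 'I_3 -> int.

Definition mut_mat (k : 'I_3) (B : exmat) : exmat :=
  fun i j =>
    if (i == k) || (j == k) then - B i j
    else B i j + sgz (B i k) * Num.max (B i k * B k j) 0.

Record gseed := GSeed {
  gs_x : 'I_3 -> QX;
  gs_B : exmat;
  gs_g : 'I_3 -> int }.

Definition mut_seed (k : 'I_3) (s : gseed) : gseed :=
  let B := gs_B s in
  let x := gs_x s in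
  let g := gs_g s in
  GSeed
    (fun j => if j == k then
        ((\prod_(i < 3 | 0 < B i k) x i ^+ `|B i k|%N)
         + (\prod_(i < 3 | B i k < 0) x i ^+ `|B i k|%N)) / x k
      else x j)
    (mut_mat k B)
    (fun j => if j == k then
        - g k + \sum_(i < 3 | 0 < B i k) B i k * g i
      else g j).

Definition mut_seq (ks : seq 'I_3) (s : gseed) : gseed :=
  foldl (fun t k => mut_seed k t) s ks.

(* z is a cluster variable of A(s) of degree d (degrees tracked along mutation;
   all cluster variables are homogeneous, so this is the degree of z) *)
Definition clvar_of_deg (s : gseed) (z : QX) (d : int) : Prop :=
  exists (ks : seq 'I_3) (i : 'I_3),
    gs_x (mut_seq ks s) i = z /\ gs_g (mut_seq ks s) i = d.

Definition xinit : 'I_3 -> QX := fun i => tofrac ('X_i : {mpoly rat[3]}).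

Definition Bmat (a : nat) : exmat :=
  fun i j =>
    match nat_of_ord i, nat_of_ord j with
    | 0, 1 => a%:Z | 0, 2 => -2 | 1, 0 => - a%:Z | 1, 2 => a%:Z
    | 2, 0 => 2 | 2, 1 => - a%:Z | _, _ => 0 end.

Definition gvec (a : nat) : 'I_3 -> int :=
  fun i => match nat_of_ord i with 1 => 2 | _ => a%:Z end.

Definition seed0 (a : nat) : gseed := GSeed xinit (Bmat a) (gvec a).

(* Main.v *)
Require Import Defs.
From HB Require Import structures.
From mathcomp Require Import all_boot all_order all_algebra.
From mathcomp Require Import fraction mpoly.
From mathcomp Require Import ring lra zify.
Import Order.TTheory GRing.Theory Num.Theory.
Set Implicit Arguments.
Unset Strict Implicit.
Local Open Scope ring_scope.
Definition phi (p : {mpoly rat[3]}) : {poly rat} :=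
  mmap (@polyC rat) (fun i : 'I_3 => if i == ord0 then 'X else 1) p.
Lemma phiM p q : phi (p * q) = phi p * phi q.
Proof. by rewrite /phi rmorphM. Qed.
Lemma phiD p q : phi (p + q) = phi p + phi q.
Proof. by rewrite /phi rmorphD. Qed.
Lemma phi1 : phi 1 = 1.
Proof. by rewrite /phi rmorph1. Qed.
Lemma phiX i : phi 'X_i = if i == ord0 then 'X else 1.
Proof. by rewrite /phi mmapX mmap1U. Qed.

Definition TD (z : QX) (d : int) : Prop :=
  exists p q : {mpoly rat[3]}, z = tofrac p / tofrac q /\
    0 < lead_coef (phi p) /\ 0 < lead_coef (phi q) /\
    d = (size (phi p))%:Z - (size (phi q))%:Z.

Lemma lc_nz (P : {poly rat}) : 0 < lead_coef P -> P != 0.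
Proof. by move=> h; apply/eqP => e; move: h; rewrite e lead_coef0 ltxx. Qed.
Lemma lc_mnz (p : {mpoly rat[3]}) : 0 < lead_coef (phi p) -> p != 0.
Proof. by move=> /lc_nz h; apply/eqP => e; move: h; rewrite e /phi rmorph0 eqxx. Qed.
Lemma lc_fnz (p : {mpoly rat[3]}) : 0 < lead_coef (phi p) -> tofrac p != 0.
Proof. by move=> /lc_mnz; rewrite tofrac_eq0. Qed.
Lemma size_pos (P : {poly rat}) : 0 < lead_coef P -> (0 < size P)%N.
Proof. by move=> /lc_nz; rewrite size_poly_gt0. Qed.

Lemma ar_mul (A B C D : nat) : (0 < A)%N -> (0 < B)%N -> (0 < C)%N -> (0 < D)%N ->
  (Posz A - Posz B) + (Posz C - Posz D) = Posz (A + C).-1 - Posz (B + D).-1.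
Proof. move=> h1 h2 h3 h4; rewrite -!subn1; lia. Qed.
Lemma ar_div (A B C D : nat) : (0 < A)%N -> (0 < B)%N -> (0 < C)%N -> (0 < D)%N ->
  (Posz A - Posz B) - (Posz C - Posz D) = Posz (A + D).-1 - Posz (B + C).-1.
Proof. move=> h1 h2 h3 h4; rewrite -!subn1; lia. Qed.
Lemma TD_uniq z d e : TD z d -> TD z e -> d = e.
Proof.
move=> [p [q [-> [hp [hq ->]]]]] [p' [q' [E [hp' [hq' ->]]]]].
have nq := lc_fnz hq. have nq' := lc_fnz hq'.
have : tofrac (p * q') = tofrac (p' * q) :> QX.
  by rewrite !tofracM -[tofrac p](divfK nq) E mulrAC divfK.
move/(congr1 (fun x => x == tofrac (p' * q))). rewrite eqxx tofrac_eq.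
move=> /eqP /(congr1 phi); rewrite !phiM => E2.
have := congr1 (fun P : {poly rat} => size P) E2 => /=; rewrite !size_mul ?lc_nz // -!subn1.
move=> h; have h1 := size_pos hp; have h2 := size_pos hq; have h3 := size_pos hp'; have h4 := size_pos hq'.
move: h h1 h2 h3 h4.
set A := size (phi p); set B := size (phi q); set C := size (phi p'); set D := size (phi q').
move=> h h1 h2 h3 h4.
have : (A + D = C + B)%N by lia.
lia.
Qed.
Lemma TD_mul z w d e : TD z d -> TD w e -> TD (z * w) (d + e).
Proof.
move=> [p [q [-> [hp [hq ->]]]]] [p' [q' [-> [hp' [hq' ->]]]]].
exists (p * p'), (q * q'); rewrite !phiM !lead_coefM !mulr_gt0 //.
split; first by rewrite !tofracM mulf_div.
do 2 split => //.
rewrite !size_mul ?lc_nz //. apply: ar_mul; exact: size_pos.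
Qed.

Lemma TD_div z w d e : TD z d -> TD w e -> TD (z / w) (d - e).
Proof.
move=> [p [q [-> [hp [hq ->]]]]] [p' [q' [-> [hp' [hq' ->]]]]].
exists (p * q'), (q * p'); rewrite !phiM !lead_coefM !mulr_gt0 //.
split; first by rewrite !tofracM invf_div mulf_div.
do 2 split => //.
rewrite !size_mul ?lc_nz //. apply: ar_div; exact: size_pos.
Qed.

Lemma TD_exp z d k : TD z d -> TD (z ^+ k) (k%:Z * d).
Proof.
move=> h; elim: k => [|k IH].
  exists 1, 1; rewrite phi1 lead_coef1 ltr01 expr0 tofrac1 divr1; split => //; split=>//; split=>//.
  by rewrite mul0r subrr.
rewrite exprS.
have -> : (k.+1)%:Z * d = d + k%:Z * d by rewrite intS mulrDl mul1r.
exact: TD_mul.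
Qed.

Lemma lc_add (A B : {poly rat}) : 0 < lead_coef A -> 0 < lead_coef B ->
  0 < lead_coef (A + B) /\ size (A + B) = maxn (size A) (size B).
Proof.
move=> hA hB.
case: (ltngtP (size A) (size B)) => h.
- rewrite lead_coefDr // addrC size_polyDl //; split => //; rewrite maxnE; lia.
- rewrite lead_coefDl // size_polyDl //; split => //; rewrite maxnE; lia.
have sA := size_pos hA.
have hc : (A + B)`_(size A).-1 = lead_coef A + lead_coef B.
  by rewrite coefD /lead_coef h.
have hpos : 0 < (A + B)`_(size A).-1 by rewrite hc addr_gt0.
have hs : size (A + B) = size A.
  apply/eqP; rewrite eqn_leq; apply/andP; split.
    have := size_polyD A B; rewrite maxnE h; move=> hh; apply: leq_trans hh _; rewrite subnn addn0.
    by [].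
  rewrite leqNgt; apply/negP => hlt.
  move: hpos; rewrite nth_default ?ltxx //.
  move: hlt sA; set m := size (A + B); set k := size A; lia.
split; last by rewrite hs.
by rewrite /lead_coef hs hc addr_gt0.
Qed.

Lemma ar_add (A B C D : nat) : (0 < A)%N -> (0 < B)%N -> (0 < C)%N -> (0 < D)%N ->
  Num.max (Posz A - Posz B) (Posz C - Posz D) = Posz (maxn (A + D).-1 (C + B).-1) - Posz (B + D).-1.
Proof.
move=> h1 h2 h3 h4; rewrite -!subn1 maxnE.
case: leP => h; lia.
Qed.

Lemma TD_add z w d e : TD z d -> TD w e -> TD (z + w) (Num.max d e).
Proof.
move=> [p [q [-> [hp [hq ->]]]]] [p' [q' [-> [hp' [hq' ->]]]]].
exists (p * q' + p' * q), (q * q').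
have h1 : 0 < lead_coef (phi p * phi q') by rewrite lead_coefM mulr_gt0.
have h2 : 0 < lead_coef (phi p' * phi q) by rewrite lead_coefM mulr_gt0.
have [hl hs] := lc_add h1 h2.
rewrite phiD !phiM hs.
split; first by rewrite addf_div ?lc_fnz // tofracD !tofracM.
split => //; split; first by rewrite lead_coefM mulr_gt0.
rewrite (size_mul (lc_nz hp) (lc_nz hq')) (size_mul (lc_nz hp') (lc_nz hq)) (size_mul (lc_nz hq) (lc_nz hq')).
apply: ar_add; exact: size_pos.
Qed.

Lemma TD_x i : TD (xinit i) (if i == ord0 then 1 else 0).
Proof.
exists 'X_i, 1; rewrite phiX phi1 tofrac1 divr1 lead_coef1; split => //.
case: (i == ord0).
  by rewrite lead_coefX size_polyX size_poly1 ltr01.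
by rewrite lead_coef1 size_poly1 ltr01 subrr.
Qed.
Lemma sgzmax (x y : int) : sgz x * Num.max (x*y) 0 =
  if (0 < x) && (0 < y) then x*y else if (x < 0) && (y < 0) then -(x*y) else 0.
Proof.
case: (ltrgt0P x) => hx; case: (ltrgt0P y) => hy /=;
rewrite ?(gtr0_sgz hx) ?(ltr0_sgz hx) ?hx ?mul0r ?mulr0 ?mul1r ?mulN1r //;
try (by rewrite max_l //; nia); try (by rewrite max_r //; nia).
all: try by rewrite hx max_r ?mulr0 //.
Qed.

Definition i0 : 'I_3 := @Ordinal 3 0 isT.
Definition i1 : 'I_3 := @Ordinal 3 1 isT.
Definition i2 : 'I_3 := @Ordinal 3 2 isT.

Definition cyc (p q r : int) : exmat := fun i j =>
  match nat_of_ord i, nat_of_ord j with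
  | 0, 1 => p | 1, 0 => - p | 1, 2 => q | 2, 1 => - q
  | 2, 0 => r | 0, 2 => - r | _, _ => 0 end.

Definition Good (s : gseed) (b : bool) (p q r t0 t1 t2 : int) : Prop :=
  (forall i j, gs_B s i j = if b then cyc p q r i j else - cyc p q r i j) /\
  gs_g s i0 = q /\ gs_g s i1 = r /\ gs_g s i2 = p /\
  TD (gs_x s i0) t0 /\ TD (gs_x s i1) t1 /\ TD (gs_x s i2) t2.

Lemma prod3 (F : 'I_3 -> QX) (P : pred 'I_3) :
  \prod_(i < 3 | P i) F i =
  (if P i0 then F i0 else 1) * (if P i1 then F i1 else 1) * (if P i2 then F i2 else 1).
Proof.
rewrite big_mkcond !big_ord_recl big_ord0 /= mulr1 mulrA.
have -> : (lift ord0 (lift ord0 ord0) : 'I_3) = i2 by apply/val_inj.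
have -> : (lift ord0 ord0 : 'I_3) = i1 by apply/val_inj.
by have -> : (ord0 : 'I_3) = i0 by apply/val_inj.
Qed.

Lemma sum3 (F : 'I_3 -> int) (P : pred 'I_3) :
  \sum_(i < 3 | P i) F i =
  (if P i0 then F i0 else 0) + (if P i1 then F i1 else 0) + (if P i2 then F i2 else 0).
Proof.
rewrite big_mkcond !big_ord_recl big_ord0 /= addr0 addrA.
have -> : (lift ord0 (lift ord0 ord0) : 'I_3) = i2 by apply/val_inj.
have -> : (lift ord0 ord0 : 'I_3) = i1 by apply/val_inj.
by have -> : (ord0 : 'I_3) = i0 by apply/val_inj.
Qed.

Lemma TD_eq z d e : TD z d -> d = e -> TD z e.
Proof. by move=> h <-. Qed.

Lemma TD_pow z d (k : int) : 0 <= k -> TD z d -> TD (z ^+ `|k|%N) (k * d).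
Proof. move=> hk h; apply: TD_eq (TD_exp _ h) _; by rewrite abszE ger0_norm. Qed.

Lemma cycE p q r :
  (cyc p q r i0 i0 = 0) * (cyc p q r i0 i1 = p) * (cyc p q r i0 i2 = - r) *
  (cyc p q r i1 i0 = - p) * (cyc p q r i1 i1 = 0) * (cyc p q r i1 i2 = q) *
  (cyc p q r i2 i0 = r) * (cyc p q r i2 i1 = - q) * (cyc p q r i2 i2 = 0).
Proof. by []. Qed.

Lemma ord3P (P : 'I_3 -> Prop) : P i0 -> P i1 -> P i2 -> forall i, P i.
Proof.
move=> h0 h1 h2 [[|[|[|i]]] Hi].
- by have -> : Ordinal Hi = i0 by apply/val_inj.
- by have -> : Ordinal Hi = i1 by apply/val_inj.
- by have -> : Ordinal Hi = i2 by apply/val_inj.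
- by [].
Qed.

Lemma Good_mut0 s b p q r t0 t1 t2 : 0 < p -> 0 < r -> Good s b p q r t0 t1 t2 ->
  Good (mut_seed i0 s) (~~ b) p (p * r - q) r (Num.max (p * t1) (r * t2) - t0) t1 t2.
Proof.
move=> hp hr [HB [g0 [g1 [g2 [x0 [x1 x2]]]]]].
split.
  apply: ord3P; apply: ord3P; rewrite /= /mut_mat !HB /cyc /i0 /i1 /i2 /=;
  case: b {HB}; rewrite /= ?opprK ?sgzmax;
  repeat (case: ifP => /=; try move/andP => [? ?]); move=> *; try lia.
have n10 : (i1 == i0) = false by [].
have n20 : (i2 == i0) = false by [].
have pl : (p < 0) = false by apply/negbTE; rewrite -leNgt ltW.
have rl : (r < 0) = false by apply/negbTE; rewrite -leNgt ltW.
have pl' : (0 < - p) = false by rewrite oppr_gt0.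
have rl' : (0 < - r) = false by rewrite oppr_gt0.
have pl'' : (- p < 0) by rewrite oppr_lt0.
have rl'' : (- r < 0) by rewrite oppr_lt0.
rewrite /mut_seed /= sum3 prod3 prod3 !HB !cycE g0 g1 g2.
split.
  case: b {HB} => /=; rewrite ?opprK ?ltxx ?hp ?hr ?pl ?rl ?pl' ?rl' ?pl'' ?rl'' /=; nia.
do 2 split => //.
split => //.
apply: TD_div x0 => /=.
case: b {HB} => /=; rewrite ?opprK ?ltxx ?hp ?hr ?pl ?rl ?pl' ?rl' ?pl'' ?rl'' /= !mul1r ?mulr1 ?abszN.
  apply: TD_eq; first exact: (TD_add (TD_pow (ltW hr) x2) (TD_pow (ltW hp) x1)).
  by rewrite maxC.
exact: (TD_add (TD_pow (ltW hp) x1) (TD_pow (ltW hr) x2)).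
Qed.

Lemma Good_mut1 s b p q r t0 t1 t2 : 0 < p -> 0 < q -> Good s b p q r t0 t1 t2 ->
  Good (mut_seed i1 s) (~~ b) p q (p * q - r) t0 (Num.max (p * t0) (q * t2) - t1) t2.
Proof.
move=> hp hq [HB [g0 [g1 [g2 [x0 [x1 x2]]]]]].
split.
  apply: ord3P; apply: ord3P; rewrite /= /mut_mat !HB /cyc /i0 /i1 /i2 /=;
  case: b {HB}; rewrite /= ?opprK ?sgzmax;
  repeat (case: ifP => /=; try move/andP => [? ?]); move=> *; lia.
have pl : (p < 0) = false by apply/negbTE; rewrite -leNgt ltW.
have ql : (q < 0) = false by apply/negbTE; rewrite -leNgt ltW.
have pl' : (0 < - p) = false by rewrite oppr_gt0.
have ql' : (0 < - q) = false by rewrite oppr_gt0.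
have pl'' : (- p < 0) by rewrite oppr_lt0.
have ql'' : (- q < 0) by rewrite oppr_lt0.
rewrite /mut_seed /= sum3 prod3 prod3 !HB !cycE g0 g1 g2.
split => //.
split.
  case: b {HB} => /=; rewrite ?opprK ?ltxx ?hp ?hq ?pl ?ql ?pl' ?ql' ?pl'' ?ql'' /=; nia.
split => //.
split => //.
split => //.
apply: TD_div x1 => /=.
case: b {HB} => /=; rewrite ?opprK ?ltxx ?hp ?hq ?pl ?ql ?pl' ?ql' ?pl'' ?ql'' /= !mul1r ?mulr1 ?abszN.
  exact: (TD_add (TD_pow (ltW hp) x0) (TD_pow (ltW hq) x2)).
apply: TD_eq; first exact: (TD_add (TD_pow (ltW hq) x2) (TD_pow (ltW hp) x0)).
by rewrite maxC.
Qed.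

Lemma Good_mut2 s b p q r t0 t1 t2 : 0 < q -> 0 < r -> Good s b p q r t0 t1 t2 ->
  Good (mut_seed i2 s) (~~ b) (q * r - p) q r t0 t1 (Num.max (r * t0) (q * t1) - t2).
Proof.
move=> hq hr [HB [g0 [g1 [g2 [x0 [x1 x2]]]]]].
split.
  apply: ord3P; apply: ord3P; rewrite /= /mut_mat !HB /cyc /i0 /i1 /i2 /=;
  case: b {HB}; rewrite /= ?opprK ?sgzmax;
  repeat (case: ifP => /=; try move/andP => [? ?]); move=> *; lia.
have rl : (r < 0) = false by apply/negbTE; rewrite -leNgt ltW.
have ql : (q < 0) = false by apply/negbTE; rewrite -leNgt ltW.
have rl' : (0 < - r) = false by rewrite oppr_gt0.
have ql' : (0 < - q) = false by rewrite oppr_gt0.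
have rl'' : (- r < 0) by rewrite oppr_lt0.
have ql'' : (- q < 0) by rewrite oppr_lt0.
rewrite /mut_seed /= sum3 prod3 prod3 !HB !cycE g0 g1 g2.
split => //.
split => //.
split.
  case: b {HB} => /=; rewrite ?opprK ?ltxx ?hr ?hq ?rl ?ql ?rl' ?ql' ?rl'' ?ql'' /=; nia.
split => //.
split => //.
apply: TD_div x2 => /=.
case: b {HB} => /=; rewrite ?opprK ?ltxx ?hr ?hq ?rl ?ql ?rl' ?ql' ?rl'' ?ql'' /= !mul1r ?mulr1 ?abszN.
  apply: TD_eq; first exact: (TD_add (TD_pow (ltW hq) x1) (TD_pow (ltW hr) x0)).
  by rewrite maxC.
exact: (TD_add (TD_pow (ltW hr) x0) (TD_pow (ltW hq) x1)).
Qed.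
Lemma Good_eq s b p q r t0 t1 t2 p' q' r' t0' t1' t2' :
  Good s b p q r t0 t1 t2 -> p = p' -> q = q' -> r = r' -> t0 = t0' -> t1 = t1' -> t2 = t2' ->
  Good s b p' q' r' t0' t1' t2'.
Proof. by move=> h <- <- <- <- <- <-. Qed.

Lemma maxL (x y : int) : y <= x -> Num.max x y = x.
Proof. by move=> h; rewrite max_l. Qed.
Lemma maxR (x y : int) : x <= y -> Num.max x y = y.
Proof. by move=> h; rewrite max_r. Qed.

Lemma mut_seq_cat ks1 ks2 s : mut_seq (ks1 ++ ks2) s = mut_seq ks2 (mut_seq ks1 s).
Proof. by rewrite /mut_seq foldl_cat. Qed.

Lemma Good0 (a : nat) : Good (seed0 a) true (Posz a) (Posz a) 2 1 0 0.
Proof.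
split; first by apply: ord3P; apply: ord3P.
do 3 split => //.
split; first exact: (TD_x i0).
split; first exact: (TD_x i1).
exact: (TD_x i2).
Qed.

Fixpoint chain (n : nat) : seq 'I_3 :=
  match n with 0 => [::] | n'.+1 => chain n' ++ [:: i2; i0] end.

Lemma chainG (a : nat) n : (3 <= a)%N ->
  Good (mut_seq (chain n) (seed0 a)) true (Posz a) (Posz a) 2
       (2 * Posz n + 1) 0 (2 * Posz n).
Proof.
move=> ha; elim: n => [|n IH].
  by apply: Good_eq (Good0 a) _ _ _ _ _ _.
rewrite /= mut_seq_cat /=.
have ha' : (0 < Posz a) by rewrite ltz_nat; lia.
have h2 : (0 : int) < 2 by [].
have H1 := Good_mut2 ha' h2 IH.
have H1' : Good (mut_seed i2 (mut_seq (chain n) (seed0 a))) false (Posz a) (Posz a) 2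
       (2 * Posz n + 1) 0 (2 * Posz n + 2).
  by apply: Good_eq H1 _ _ _ _ _ _ => //; try lia; rewrite maxL; lia.
have H2 := Good_mut0 ha' h2 H1'.
by apply: Good_eq H2 _ _ _ _ _ _ => //; try lia; rewrite maxR; lia.
Qed.

Fixpoint useq (a x0 x1 : int) (j : nat) : int :=
  match j with
  | 0 => x0 | 1 => x1
  | S ((S k) as k1) => a * useq a x0 x1 k1 - useq a x0 x1 k
  end.

Lemma useqSS a x0 x1 j : useq a x0 x1 j.+2 = a * useq a x0 x1 j.+1 - useq a x0 x1 j.
Proof. by []. Qed.

Section Seqs.
Variable a : nat.
Hypothesis ha : (3 <= a)%N.
Let A : int := Posz a.
Let hA : 3 <= A. Proof. rewrite /A; lia. Qed.
Definition uu j := useq (Posz a) 2 (Posz a) j.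
Definition UU j := useq (Posz a) 0 1 j.

Lemma uu_mono j : 0 < uu j /\ uu j < uu j.+1.
Proof.
elim: j => [|j [h1 h2]]; first by rewrite /uu /=; split => //; lia.
split; first lia.
rewrite /uu useqSS -/(uu j) -/(uu j.+1).
have := hA; rewrite /A => hA'. nia.
Qed.

Lemma UU_mono j : 0 <= UU j /\ UU j < UU j.+1.
Proof.
elim: j => [|j [h1 h2]]; first by rewrite /UU /=.
split; first lia.
rewrite /UU useqSS -/(UU j) -/(UU j.+1).
have := hA; rewrite /A => hA'. nia.
Qed.

Lemma uu_UU j : uu j.+1 + 2 * UU j = Posz a * UU j.+1.
Proof.
suff : (uu j.+1 + 2 * UU j = Posz a * UU j.+1) /\ (uu j.+2 + 2 * UU j.+1 = Posz a * UU j.+2) by case.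
elim: j => [|j [h1 h2]]; first by rewrite /uu /UU /=; split; nia.
split => //.
rewrite /uu /UU !useqSS -/(uu j.+1) -/(uu j.+2) -/(UU j) -/(UU j.+1) -/(UU j.+2).
rewrite /uu /UU !useqSS in h2 h1 *.
nia.
Qed.

Lemma uu_le j : uu j.+1 <= Posz a * UU j.+1.
Proof. have := uu_UU j; have := UU_mono j; lia. Qed.

Lemma uu_inj : injective (fun m => uu m.+2).
Proof.
have H : forall m k, uu m < uu (m + k.+1).
  move=> m; elim => [|k IH]; first by rewrite addn1; case: (uu_mono m).
  by rewrite addnS; case: (uu_mono (m + k.+1)) => _ h; lia.
move=> m m' /= E.
case: (ltngtP m m') => h //.
  have := H m.+2 (m' - m).-1.
  have -> : (m.+2 + (m' - m).-1.+1 = m'.+2)%N by lia.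
  by rewrite -E ltxx.
have := H m'.+2 (m - m').-1.
have -> : (m'.+2 + (m - m').-1.+1 = m.+2)%N by lia.
by rewrite E ltxx.
Qed.
End Seqs.

Fixpoint alt (j : nat) : seq 'I_3 :=
  match j with 0 => [::] | j'.+1 => alt j' ++ [:: if odd j' then i0 else i1] end.

Definition cc (a n k : nat) : int := (2 * Posz n + 1) * UU a k.

Lemma altG (a n j : nat) : (3 <= a)%N ->
  Good (mut_seq (chain n ++ alt j) (seed0 a)) (~~ odd j) (Posz a)
   (if odd j then uu a j else uu a j.+1) (if odd j then uu a j.+1 else uu a j)
   (if odd j then cc a n j else cc a n j.+1) (if odd j then cc a n j.+1 else cc a n j)
   (2 * Posz n).
Proof.
move=> ha.
have ha' : (0 < Posz a) by rewrite ltz_nat; lia.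
elim: j => [|j IH].
  rewrite cats0 /=; apply: Good_eq (chainG n ha) _ _ _ _ _ _ => //;
  rewrite /cc /UU /=; lia.
rewrite /= catA mut_seq_cat /=.
have hu := uu_mono ha j.+1.
have hU := UU_mono ha j.+1.
have hle := uu_le ha j.
move: IH; case: (odd j) => /= IH.
- have H := Good_mut0 ha' (proj1 hu) IH.
  apply: Good_eq H _ _ _ _ _ _ => //.
  rewrite maxL /cc /UU ?useqSS -/(UU a j) -/(UU a j.+1); nia.
- have H := Good_mut1 ha' (proj1 hu) IH.
  apply: Good_eq H _ _ _ _ _ _ => //.
  rewrite maxL /cc /UU ?useqSS -/(UU a j) -/(UU a j.+1); nia.
Qed.

Lemma pigeon (T : eqType) (f : nat -> T) : injective f -> forall l : seq T, exists n, f n \notin l.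
Proof.
move=> inj l.
case: (boolP (all (fun n => f n \in l) (iota 0 (size l).+1))) => h.
  exfalso.
  have U : uniq (map f (iota 0 (size l).+1)) by rewrite map_inj_uniq // iota_uniq.
  have sub : {subset map f (iota 0 (size l).+1) <= l}.
    by move=> x /mapP [n hn ->]; exact: (allP h).
  have := uniq_leq_size U sub; rewrite size_map size_iota; lia.
by move/allPn: h => [n _ hn]; exists n.
Qed.

Unset Implicit Arguments.
Theorem mainTheorem18 (a : nat) (ha : (3 <= a)%N) :
  forall ds : seq int, exists d : int, d \notin ds /\
    forall zs : seq QX, exists z : QX, z \notin zs /\ clvar_of_deg (seed0 a) z d.
Proof.
move=> ds.
have [m hm] := pigeon (uu_inj ha) ds.
exists (uu a m.+2); split => // zs.
pose v := if odd m then i0 else i1.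
pose z n := gs_x (mut_seq (chain n ++ alt m.+1) (seed0 a)) v.
have zdeg : forall n, TD (z n) (cc a n m.+2) /\
    gs_g (mut_seq (chain n ++ alt m.+1) (seed0 a)) v = uu a m.+2.
  move=> n; have := altG n m.+1 ha; rewrite /z /v /=.
  by case: (odd m) => /= [[_ [g0 [_ [_ [x0 _]]]]] | [_ [_ [g1 [_ [_ [x1 _]]]]]]].
have zinj : injective z.
  move=> n n' E.
  have h1 := proj1 (zdeg n); have h2 := proj1 (zdeg n').
  rewrite E in h1; have := TD_uniq h1 h2; rewrite /cc.
  have [hU1 hU2] := UU_mono ha m.+1.
  move=> hh.
  have : Posz n = Posz n' by nia.
  by case.
have [n hn] := pigeon zinj zs.
exists (z n); split => //.
exists (chain n ++ alt m.+1), v; split => //.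
exact: (proj2 (zdeg n)).
Qed.
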